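(* Let $n\ge2$ and let $X$ be a simple directed graph with vertex set $[n]$. Let $p,q\in[n]$ satisfy: - $p\to q\in E(X)$; - $q\to p\notin E(X)$; - $\{p,q\}$ is sink-equivalent in $X$. Then $$\mathrm{ODP}(X,\mathrm{Path}_n)_{p\to q}=x\cdot\mathrm{ODP}(X-q,\mathrm{Path}_{n-1}),$$ where $X-q$ is the induced subgraph of $X$ on $[n]\setminus\{q\}$.
   Context: $\mathrm{Path}_n$ is the directed graph on $[n]$ with edges $i\to i+1$ for $1\le i\le n-1$. For a simple directed graph $X$, a set $S\subseteq V(X)$ is sink-equivalent if for every $t\notin S$, either $s\to t\in E(X)$ for all $s\in S$, or $s\to t\notin E(X)$ for all $s\in S$. For directed graphs $X,Y$ with $|V(X)|=|V(Y)|$, $\mathrm{DFS}(X,Y)$ has as vertices the bijections $\sigma:V(X)\to V(Y)$. For each $\sigma$ and ordered pair $(a,b)$ of distinct vertices, it has $m_X(a,b)m_Y(\sigma(a),\sigma(b))$ edges from $\sigma$ to $\sigma\circ(a\,b)$, where $m_X(a,b)$ is the number of edges $a\to b$ in $X$. Thus $\mathrm{outdeg}(\sigma)=\sum_{a\ne b}m_X(a,b)m_Y(\sigma(a),\sigma(b))$ and $\mathrm{ODP}(X,Y)=\sum_\sigma x^{\mathrm{outdeg}(\sigma)}$. $\mathrm{ODP}(X,Y)_{a\to b}$ is the sum of $x^{\mathrm{outdeg}(\sigma)}$ over bijections $\sigma$ with $\sigma(a)\to\sigma(b)\in E(Y)$. *)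

(* Defs.v *)
From HB Require Import structures.
From mathcomp Require Import all_boot all_order all_algebra.
Set Implicit Arguments. Unset Strict Implicit. Unset Printing Implicit Defensive.
Import GRing.Theory.
Local Open Scope ring_scope.

(* A simple directed graph on a finite vertex type T is a loopless boolean
   relation (at most one edge a -> b, so m_X(a,b) = X a b as 0/1). *)

(* Path_n on [n] = 'I_n (vertex i+1 is ordinal i): edges i -> i+1. *)
Definition Path (n : nat) : rel 'I_n := fun i j => (j : nat) == i.+1.
Arguments Path n : clear implicits.

Definition sink_equiv (T : finType) (X : rel T) (S : {set T}) : Prop :=
  forall t, t \notin S ->
    (forall s, s \in S -> X s t) \/ (forall s, s \in S -> ~~ X s t).

Definition isbij (T U : finType) (f : {ffun T -> U}) : bool :=
  injectiveb f && [forall u, u \in codom f].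

Definition outdeg (T U : finType) (X : rel T) (Y : rel U) (f : {ffun T -> U}) : nat :=
  (\sum_(a : T) \sum_(b : T | a != b) (X a b * Y (f a) (f b)))%N.

Definition ODP (T U : finType) (X : rel T) (Y : rel U) : {poly int} :=
  \sum_(f : {ffun T -> U} | isbij f) 'X^(outdeg X Y f).

Definition ODP_edge (T U : finType) (X : rel T) (Y : rel U) (a b : T) : {poly int} :=
  \sum_(f : {ffun T -> U} | isbij f && Y (f a) (f b)) 'X^(outdeg X Y f).

Definition del_vertex (T : finType) (X : rel T) (q : T) : rel {x : T | x != q} :=
  fun u v => X (val u) (val v).
Arguments del_vertex {T} X q _ _.

(* Main.v *)
Require Import Defs.
From HB Require Import structures.
From mathcomp Require Import all_boot all_order all_algebra.
From mathcomp Require Import zify.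
Import GRing.Theory.

Lemma isbijE (T U : finType) (f : {ffun T -> U}) :
  #|U| <= #|T| -> isbij f = injectiveb f.
Proof.
rewrite /isbij => cU; case: injectiveP => //= inj.
by apply/forallP => u; apply: inj_card_onto.
Qed.

Lemma sum_split (T : finType) (q : T) (u0 : {x : T | x != q}) (F : T -> nat) :
  \sum_a F a = F q + \sum_(u : {x : T | x != q}) F (val u).
Proof.
rewrite (bigD1 q) //=; congr (_ + _).
rewrite (reindex (fun u : {x : T | x != q} => val u)) /=; last first.
  exists (insubd u0).
  - by move=> u _; apply: valKd.
  - by move=> a; rewrite inE => aq /=; rewrite val_insubd aq.
by apply: eq_bigl => -[x xq] /=; rewrite xq.
Qed.

Lemma outdegE (T U : finType) (X : rel T) (Y : rel U) (f : {ffun T -> U}) :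
  irreflexive X -> outdeg X Y f = \sum_a \sum_b X a b * Y (f a) (f b).
Proof.
move=> irrX; apply: eq_bigr => a _; rewrite big_mkcond; apply: eq_bigr => b _.
by case: eqP => // ->; rewrite irrX.
Qed.

Lemma arithC (t a b : nat) : (b + (t < b) == (a + (t < a)).+1) = (b == a.+1) && (a != t).
Proof. case: (ltnP t a); case: (ltnP t b) => /= *; apply/idP/idP; lia. Qed.

Lemma arithB (t a : nat) : ((t.+1) == (a + (t < a)).+1) = (a == t).
Proof. case: (ltnP t a) => /= *; apply/idP/idP; lia. Qed.

Lemma arithA (t b : nat) : (b + (t < b) == t.+2) = (b == t.+1).
Proof. case: (ltnP t b) => /= *; apply/idP/idP; lia. Qed.

Lemma arithK t a : (a + (t < a) - (t < a + (t < a)))%N = a.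
Proof.
case: (ltnP t a) => h /=.
  have -> : (t < a + 1)%N by lia.
  lia.
have -> : (t < a + 0)%N = false by lia.
lia.
Qed.

Local Open Scope ring_scope.

Theorem mainTheorem11 (n : nat) (X : rel 'I_n) (p q : 'I_n) :
  (2 <= n)%N ->
  irreflexive X ->
  X p q ->
  ~~ X q p ->
  sink_equiv X [set p; q] ->
  ODP_edge X (Path n) p q = 'X * ODP (del_vertex X q) (Path n.-1).
Proof.
case: n X p q => [|[|k]] X p q //= _ irrX Xpq nXqp sink.
have pq : p != q by apply/eqP => E; move: Xpq; rewrite E irrX.
pose S := {x : 'I_k.+2 | x != q}.
pose p' : S := exist _ p pq.
pose ex (tau : {ffun S -> 'I_k.+1}) : {ffun 'I_k.+2 -> 'I_k.+2} :=
  [ffun v => if v == q then inord (tau p').+1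
             else inord (tau (insubd p' v) + (tau p' < tau (insubd p' v)))%N].
pose co (sg : {ffun 'I_k.+2 -> 'I_k.+2}) : {ffun S -> 'I_k.+1} :=
  [ffun u => inord (sg (val u) - (sg p < sg (val u)))%N].
have exS tau (u : S) : (ex tau (val u) : nat) = (tau u + (tau p' < tau u))%N.
  rewrite /ex ffunE (negPf (valP u)).
  have -> : insubd p' (val u) = u by apply: valKd.
  rewrite inordK //; have := ltn_ord (tau u); case: (tau p' < tau u)%N => /=; lia.
have exq tau : (ex tau q : nat) = (tau p').+1.
  by rewrite /ex ffunE eqxx inordK //; have := ltn_ord (tau p'); lia.
have exp tau : (ex tau p : nat) = tau p'.
  by have := exS tau p'; rewrite ltnn addn0.
have Sval (a : 'I_k.+2) : a != q -> exists u : S, a = val u.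
  by move=> aq; exists (exist _ a aq).
have cardS : #|{: S}| = k.+1.
  by rewrite card_sig cardC1 card_ord.
have injE tau : injectiveb (ex tau) = injectiveb tau.
  apply/injectiveP/injectiveP => inj.
    move=> u v E; apply: val_inj; apply: inj; apply: val_inj.
    by rewrite /= !exS E.
  move=> a b.
  case: (eqVneq a q) => [->|aq]; case: (eqVneq b q) => [->|bq] // E.
  - have [v Ev] := Sval _ bq; subst b; move/(congr1 val): E; rewrite /= exq exS.
    by case: (ltnP (tau p') (tau v)) => /= *; lia.
  - have [u Eu] := Sval _ aq; subst a; move/(congr1 val): E; rewrite /= exq exS.
    by case: (ltnP (tau p') (tau u)) => /= *; lia.
  have [u Eu] := Sval _ aq; have [v Ev] := Sval _ bq; subst a b.
  move/(congr1 val): E; rewrite /= !exS => E; congr val; apply: inj; apply: val_inj.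
  move: E; case: (ltnP (tau p') (tau u)); case: (ltnP (tau p') (tau v)) => /= *; lia.
have pathE tau : Path k.+2 (ex tau p) (ex tau q).
  by rewrite /Path exq exp.
rewrite /ODP_edge /ODP.
rewrite (eq_bigl (fun f : {ffun 'I_k.+2 -> 'I_k.+2} => injectiveb f && Path k.+2 (f p) (f q))); last first.
  by move=> f; rewrite isbijE // card_ord.
rewrite (reindex ex); last first.
  exists co.
  - move=> tau _; apply/ffunP => u; rewrite ffunE; apply: val_inj => /=.
    by rewrite exS exp arithK inordK // ltnS ltnW.
  - move=> sg; rewrite inE => /andP [/injectiveP inj].
    rewrite /Path => /eqP sq.
    have cp : (co sg p' : nat) = sg p.
      by rewrite ffunE /= ltnn subn0 inordK // -ltnS -sq.
    apply/ffunP => v; apply: val_inj; case: (eqVneq v q) => [->|vq].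
      by rewrite /= exq cp sq.
    have [u ->] := Sval _ vq; rewrite /= exS cp ffunE /=.
    have nq : sg (val u) != sg q by rewrite (inj_eq inj); exact: (svalP u).
    have := ltn_ord (sg (val u)); move: nq; rewrite -(inj_eq val_inj) /= sq.
    case: (ltnP (sg p) (sg (val u))) => /= h1 h2 h3.
      rewrite inordK; last lia.
      have -> : (sg p < sg (sval u) - 1)%N.
        by rewrite ltn_subRL add1n ltn_neqAle eq_sym h2 h1.
      by rewrite addn1 subn1 prednK //; apply: leq_ltn_trans _ h1.
    rewrite subn0 inordK; last by rewrite (leq_ltn_trans h1) // -ltnS -sq.
    by rewrite ltnNge h1 /= addn0.
rewrite big_distrr /=; apply: eq_big => tau.
  by rewrite injE pathE andbT isbijE // cardS card_ord.
rewrite injE => /andP [/injectiveP inj _].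
rewrite -exprS; congr ('X^ _).
have injn (u : S) : ((tau u : nat) == tau p') = (u == p').
  by rewrite -[LHS]/(tau u == tau p') (inj_eq inj).
rewrite !outdegE //; last by move=> u; apply: irrX.
rewrite (@sum_split _ q p').
rewrite addnC.
rewrite (eq_bigr (fun u : S => X (val u) q * Path k.+2 (ex tau (val u)) (ex tau q) +
   \sum_(v : S) X (val u) (val v) * Path k.+2 (ex tau (val u)) (ex tau (val v))))%N; last first.
  by move=> u _; rewrite (@sum_split _ q p').
rewrite (@sum_split _ q p') irrX mul0n add0n big_split /=.
have tP : (tau p' : nat) = tau p' by [].
have hB : (\sum_(i : S) X (sval i) q * Path k.+2 (ex tau (sval i)) (ex tau q) = 1)%N.
  rewrite (bigD1 p') //= big1 ?addn0.
    by rewrite Xpq mul1n; have := pathE tau; case: (Path _ _ _).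
  move=> i ip; rewrite /Path exq exS arithB injn (negPf ip).
  by rewrite muln0.
have hA : (\sum_(u : S) X q (sval u) * Path k.+2 (ex tau q) (ex tau (sval u)) =
    \sum_(u : S) del_vertex X q p' u * Path k.+1 (tau p') (tau u))%N.
  apply: eq_bigr => u _; rewrite /Path /del_vertex exq exS arithA /=.
  case E: (_ == _); rewrite ?muln0 //.
  have up : u != p'.
    by apply: contraTneq E => ->; apply/negP => /eqP; lia.
  have uq : sval u \notin [set p; q].
    rewrite !inE negb_or (svalP u) andbT.
    by move: up; apply: contra => /eqP h; apply/eqP/val_inj.
  case: (sink _ uq) => h.
    by rewrite !h // !inE eqxx ?orbT.
  by rewrite (negPf (h q _)) ?(negPf (h p _)) // !inE eqxx ?orbT.
have hC : (\sum_(i : S) \sum_(v : S)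
      X (sval i) (sval v) * Path k.+2 (ex tau (sval i)) (ex tau (sval v)) =
    \sum_(i : S | i != p') \sum_(v : S) del_vertex X q i v * Path k.+1 (tau i) (tau v))%N.
  rewrite (bigD1 p') //= big1 ?add0n.
    apply: eq_bigr => i ip; apply: eq_bigr => v _.
    by rewrite /Path /del_vertex !exS arithC injn ip andbT.
  move=> v _; rewrite /Path !exS exp.
  have -> : ((tau v + (tau p' < tau v))%N == (tau p').+1) = false.
    by case: ltnP => /= h; apply/negP => /eqP; lia.
  by rewrite muln0.
rewrite hB hC hA [in RHS](bigD1 p') //=.
by rewrite add1n addSn addnC.
Qed.
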